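(* Let $q$ be a prime power. For any given integers $r>0$ and $\delta>0$ there exist a constant $c_{q,\delta,r}$ and an integer $n_0$ such that for every $n>n_0$, $\mathcal{C}_q(n,n-\delta,r)=c_{q,\delta,r}$.
   Context: For integers $n\ge k\ge r\ge 0$, a $q$-covering design $\mathcal{C}_q(n,k,r)$ is a collection $\mathbb{S}$ of $k$-dimensional subspaces of $\mathbb{F}_q^n$ such that every $r$-dimensional subspace of $\mathbb{F}_q^n$ is contained in at least one element of $\mathbb{S}$. $\mathcal{C}_q(n,k,r)$ denotes the minimum number of subspaces in such a design. *)

(* Defs.v *)
From HB Require Import structures.
From mathcomp Require Import all_boot all_order all_algebra all_field.
Set Implicit Arguments. Unset Strict Implicit. Unset Printing Implicit Defensive.
Import GRing.Theory.

Definition is_qcovering (F : finFieldType) (n k r : nat)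
    (S : seq {vspace 'rV[F]_n}) : Prop :=
  (forall V, V \in S -> \dim V = k) /\
  (forall U : {vspace 'rV[F]_n}, \dim U = r -> exists2 V, V \in S & (U <= V)%VS).

Definition qcov_number_is (F : finFieldType) (n k r m : nat) : Prop :=
  (exists S : seq {vspace 'rV[F]_n}, [/\ uniq S, is_qcovering k r S & size S = m]) /\
  (forall S : seq {vspace 'rV[F]_n}, uniq S -> is_qcovering k r S -> m <= size S).

(* Main.v *)
Require Import Defs.
From HB Require Import structures.
From mathcomp Require Import all_boot all_order all_algebra all_field.
From mathcomp Require Import zify.
From Stdlib Require Import ClassicalDescription.
Set Implicit Arguments. Unset Strict Implicit. Unset Printing Implicit Defensive.
Import GRing.Theory.

Local Open Scope ring_scope.
Section Ext.
Variables (K : fieldType) (vT : vectType K).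

Lemma dim_add_line (U : {vspace vT}) v : v \notin U -> \dim (U + <[v]>) = (\dim U).+1.
Proof.
move=> vU; have v0 : v != 0 by apply: contraNneq vU => ->; rewrite mem0v.
rewrite dimv_disjoint_sum ?dim_vline ?v0 ?addn1 //.
apply/eqP; rewrite -subv0; apply/subvP => w /memv_capP [wU /vlineP [c wc]].
rewrite memv0; apply/eqP; move: wU; rewrite wc.
have [->|c0] := eqVneq c 0; first by rewrite scale0r.
move=> cU; case/negP: vU; have := memvZ c^-1 cU.
by rewrite scalerA mulVf // scale1r.
Qed.

Lemma vext (U : {vspace vT}) k : (\dim U <= k)%N -> (k <= dim vT)%N ->
  exists2 V : {vspace vT}, (U <= V)%VS & \dim V = k.
Proof.
move=> Uk kn; move Ed: (k - \dim U)%N => d; elim: d U Uk Ed => [|d IH] U Uk Ed.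
  by exists U => //; apply/eqP; rewrite eqn_leq Uk /= -subn_eq0 Ed.
have : ~~ (fullv <= U)%VS.
  apply/negP => fU; have := dimvS fU; rewrite dimvf => h.
  have h2 : (\dim U < k)%N by rewrite -subn_gt0 Ed.
  by have := leq_trans h2 kn; rewrite ltnNge h.
case/subvPn => v _ vU.
have h1 : (\dim (U + <[v]>) <= k)%N by rewrite dim_add_line // -subn_gt0 Ed.
have h2 : (k - \dim (U + <[v]>))%N = d by rewrite dim_add_line // subnS Ed.
have [V UV dV] := IH (U + <[v]>)%VS h1 h2.
by exists V => //; apply: subv_trans UV; apply: addvSl.
Qed.
End Ext.

Section Emb.
Variables (F : finFieldType) (n : nat).
Definition Mm : 'M[F]_(n, 1+n) := row_mx 0 1%:M.
Definition embf : 'Hom('rV[F]_n, 'rV[F]_(1+n)) := linfun (mulmxr Mm).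
Definition prj : 'Hom('rV[F]_(1+n), 'rV[F]_n) := linfun (mulmxr (col_mx (0 : 'M_(1,n)) 1%:M)).
Definition ee : 'rV[F]_(1+n) := row_mx 1%:M 0.
Definition phi (V : {vspace 'rV[F]_n}) : {vspace 'rV[F]_(1+n)} := (embf @: V + <[ee]>)%VS.

Lemma embfE v : embf v = row_mx 0 v.
Proof. by rewrite lfunE /= /Mm mul_mx_row mulmx0 mulmx1. Qed.

Lemma prjE u : prj u = rsubmx u.
Proof. by rewrite lfunE /= -{1}(hsubmxK u) mul_row_col mulmx0 add0r mulmx1. Qed.

Lemma decomp u : u = (lsubmx u 0 0) *: ee + embf (prj u).
Proof.
rewrite embfE prjE /ee scale_row_mx scaler0 add_row_mx addr0 add0r.
by rewrite scalemx1 -mx11_scalar hsubmxK.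
Qed.

Lemma dim_phi V : \dim (phi V) = (\dim V).+1.
Proof.
rewrite /phi dim_add_line; last first.
  apply/memv_imgP => -[x _ /(congr1 lsubmx)]; rewrite embfE row_mxKl /ee row_mxKl.
  move/matrixP => /(_ 0 0); rewrite !mxE /=. by move/eqP; rewrite oner_eq0.
rewrite limg_dim_eq //; apply/eqP; rewrite -subv0; apply/subvP => w /memv_capP [_].
rewrite memv_ker embfE memv0 => /eqP/(congr1 rsubmx); rewrite row_mxKr linear0 => ->.
by [].
Qed.

Lemma phi_cover (r : nat) (S : seq {vspace 'rV[F]_n}) : (r <= n)%N ->
  (forall W : {vspace 'rV[F]_n}, \dim W = r -> exists2 V, V \in S & (W <= V)%VS) ->
  forall U : {vspace 'rV[F]_(1+n)}, \dim U = r -> exists2 V, V \in map phi S & (U <= V)%VS.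
Proof.
move=> rn hS U dU.
have h0 : (\dim (prj @: U) <= r)%N by rewrite -dU -(limg_ker_dim prj U) leq_addl.
have rn' : (r <= dim 'rV[F]_n)%N by rewrite dim_matrix mul1r.
have [W W0W dW] := vext h0 rn'.
have [V VS WV] := hS W dW.
exists (phi V); first exact: map_f.
apply/subvP => u uU; rewrite (decomp u) /phi addrC; apply: memv_add.
  apply: memv_img; apply: (subvP WV); apply: (subvP W0W); exact: memv_img.
by apply: memvZ; apply: memv_line.
Qed.
End Emb.

Lemma full_cover (F : finFieldType) (n k r : nat) : (r <= k)%N -> (k <= n)%N ->
  exists S : seq {vspace 'rV[F]_n}, uniq S /\ is_qcovering k r S.
Proof.
move=> rk kn.
exists (undup [seq V <- [seq <<enum A>>%VS | A : {set 'rV[F]_n}] | \dim V == k]).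
split; first exact: undup_uniq.
split.
  by move=> V; rewrite mem_undup mem_filter => /andP [/eqP].
move=> U dU.
have kn' : (k <= dim 'rV[F]_n)%N by rewrite dim_matrix mul1r.
have [V UV dV] := vext (leq_trans (eq_leq dU) rk) kn'.
exists V => //; rewrite mem_undup mem_filter dV eqxx /=.
apply/mapP; exists [set x in vbasis V]; first by rewrite mem_enum.
rewrite -{1}(span_basis (vbasisP V)); apply: eq_span => x.
by rewrite mem_enum inE.
Qed.


Local Close Scope ring_scope.

Lemma evconst (f : nat -> nat) (N0 : nat) :
  (forall n, N0 <= n -> f n.+1 <= f n) ->
  exists n1, N0 <= n1 /\ forall n, n1 <= n -> f n = f n1.
Proof.
move=> mono.
have chain : forall a b, N0 <= a -> a <= b -> f b <= f a.
  move=> a b Na; elim: b => [|b IH].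
    by rewrite leqn0 => /eqP ->.
  rewrite leq_eqVlt => /orP [/eqP <- //|ab].
  exact: leq_trans (mono b (leq_trans Na ab)) (IH ab).
move Eb: (f N0) => b; elim/ltn_ind: b N0 Eb chain mono => b IH N0 Eb chain mono.
have [H|H] := classic (forall n, N0 <= n -> f n = f N0).
  by exists N0.
have [n Nn fn] : exists2 n, N0 <= n & f n != f N0.
  apply: NNPP => H2; apply: H => n Nn; apply/eqP; apply: NNPP => H3.
  by apply: H2; exists n => //; apply/negP.
have lt : f n < b by rewrite -Eb ltn_neqAle fn chain.
have [n1 [n1n H1]] := IH (f n) lt n erefl
  (fun a c na ac => chain a c (leq_trans Nn na) ac)
  (fun m nm => mono m (leq_trans Nn nm)).
by exists n1; split => //; apply: leq_trans n1n.
Qed.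

Section Main.
Variables (F : finFieldType) (r delta : nat).

Definition covP n m : Prop := exists S : seq {vspace 'rV[F]_n},
  [/\ uniq S, is_qcovering (n - delta) r S & size S = m].
Definition covb n m : bool := if excluded_middle_informative (covP n m) then true else false.
Lemma covbP n m : reflect (covP n m) (covb n m).
Proof. by rewrite /covb; case: excluded_middle_informative => h; constructor. Qed.

Definition mn n : nat := match excluded_middle_informative (exists m, covb n m) with
  | left H => ex_minn H | right _ => 0 end.

Lemma mn_spec n : r + delta <= n -> covP n (mn n) /\ forall m, covP n m -> mn n <= m.
Proof.
move=> hn.
have ex : exists m, covb n m.
  have h1 : r <= n - delta.
    lia.
  have [S [uS cS]] := @full_cover F n (n - delta) r h1 (leq_subr _ _).
  by exists (size S); apply/covbP; exists S.
rewrite /mn; case: excluded_middle_informative => // H.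
case: ex_minnP => m /covbP Hm Hmin; split => // m' /covbP; exact: Hmin.
Qed.

Lemma mn_mono n : r + delta <= n -> mn n.+1 <= mn n.
Proof.
move=> hn; have [[S [uS [dS cS] sS]] _] := mn_spec hn.
have [_ Hmin] := mn_spec (leq_trans hn (leqnSn n)).
have rn : r <= n by apply: leq_trans hn; rewrite leq_addr.
have dn : delta <= n by apply: leq_trans hn; rewrite leq_addl.
pose S' : seq {vspace 'rV[F]_n.+1} := undup (map (@phi F n) S).
apply: leq_trans (Hmin (size S') _) _.
  exists S'; split => //; first exact: undup_uniq.
  split.
    move=> V; rewrite mem_undup => /mapP [V0 V0S ->].
    rewrite dim_phi dS //; lia.
  move=> U dU; have [V VS UV] := phi_cover rn cS dU.
  by exists V => //; rewrite mem_undup.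
by rewrite -sS (leq_trans (size_undup _)) // size_map.
Qed.
End Main.

Theorem mainTheorem1 (F : finFieldType) (r delta : nat) :
  0 < r -> 0 < delta ->
  exists c n0 : nat, forall n : nat, n0 < n -> qcov_number_is F n (n - delta) r c.
Proof.
move=> _ _.
have [n1 [hn1 H1]] := evconst (@mn_mono F r delta).
exists (mn F r delta n1), n1 => n n1n.
have hn : r + delta <= n by apply: leq_trans hn1 (ltnW n1n).
rewrite -(H1 n (ltnW n1n)).
have [[S [uS cS sS]] Hmin] := mn_spec F hn.
split; first by exists S.
by move=> S' uS' cS'; apply: Hmin; exists S'.
Qed.
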